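(* Let $G=(V,D)$ be a directed graph whose model has dimension $|D|+1$, and let $J=J(\psi_G)$. Suppose $G$ is not complete. Let $i\in V$, and let $S$ be any set of $|D|+1$ columns of $J$ containing no column $K_{ij}$ with $j\in V$ (including $K_{ii}$). Then $\mathrm{rank}(J_S)\le|D|-|\mathrm{ch}(i)|+1$.
   Context: A directed graph $G=(V,D)$ has edge set $D\subseteq V\times V$ of ordered pairs $(i,j)$, $i\neq j$. It is complete if every pair of distinct nodes is adjacent. $\mathrm{ch}(i)$ is the set of children of $i$. $\Lambda$ is the $V\times V$ matrix with indeterminate entries $\lambda_{ij}$ for $(i,j)\in D$ and zeros elsewhere, and $s$ is a further indeterminate. Let $\psi_G(\Lambda,s)=s(I-\Lambda)(I-\Lambda)^T=K$. The model of $G$ is the image of $\psi_G$ over real $\Lambda$ with $I-\Lambda$ invertible and $s>0$; its dimension is that of its Zariski closure, equivalently the generic rank of the Jacobian. The transposed Jacobian $J(\psi_G)$ has rows indexed by $\{\lambda_{kl}:(k,l)\in D\}\cup\{s\}$ and columns indexed by $K_{ij}$ (with $K_{ij}=K_{ji}$), with entries $\partial K_{ij}/\partial\theta$. $J_S$ is the submatrix on the columns in $S$, and rank means rank over $\mathbb{R}(\lambda,s)$. *)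

(* Defs.v *)
From HB Require Import structures.
From mathcomp Require Import all_boot all_order all_algebra.
From mathcomp Require Import fraction.
From mathcomp.multinomials Require Import mpoly.
Set Implicit Arguments. Unset Strict Implicit. Unset Printing Implicit Defensive.
Import Order.TTheory GRing.Theory Num.Theory.
Local Open Scope ring_scope.

Definition loopless (n : nat) (D : {set 'I_n * 'I_n}) : Prop :=
  forall v : 'I_n, (v, v) \notin D.

Definition complete (n : nat) (D : {set 'I_n * 'I_n}) : Prop :=
  forall a b : 'I_n, a != b -> ((a, b) \in D) || ((b, a) \in D).

Definition ch (n : nat) (D : {set 'I_n * 'I_n}) (i : 'I_n) : {set 'I_n} :=
  [set j | (i, j) \in D].

(* Indeterminates: #|D|.+1 variables; the k-th edge (in enum order) of D
   gets the variable 'X_(widen k) = lambda_{e_k}, and the last variable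
   'X_(ord_max) is s. *)
Notation nvars D := (#|D|.+1).

Definition lam_var (n : nat) (D : {set 'I_n * 'I_n}) (k : 'I_#|D|) : 'I_(nvars D) :=
  widen_ord (leqnSn _) k.

Definition s_var (n : nat) (D : {set 'I_n * 'I_n}) : 'I_(nvars D) := ord_max.

(* The matrix Lambda: lambda_{ij} at (i,j) for (i,j) in D, 0 elsewhere. *)
Definition Lambda (R : realFieldType) (n : nat) (D : {set 'I_n * 'I_n})
  : 'M[{mpoly R[nvars D]}]_n :=
  \matrix_(i, j) \sum_(k < #|D| | enum_val k == (i, j)) 'X_(lam_var k).

Definition Kmat (R : realFieldType) (n : nat) (D : {set 'I_n * 'I_n})
  : 'M[{mpoly R[nvars D]}]_n :=
  'X_(s_var D) *: ((1%:M - Lambda R D) *m (1%:M - Lambda R D)^T).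

(* Columns of J are indexed by the entries K_{ij} with K_{ij} = K_{ji};
   we represent them by pairs (i,j) with i <= j. *)
Definition columns (n : nat) : {set 'I_n * 'I_n} :=
  [set p : 'I_n * 'I_n | (p.1 <= p.2)%N].

(* J_S : the submatrix of the transposed Jacobian J(psi_G) on the columns in
   S, with rows indexed by the parameters (lambda_{kl} for (k,l) in D, and s),
   and entries dK_{ij}/dtheta, viewed over the field of rational functions
   R(lambda, s) = {fraction {mpoly R[#|D|.+1]}}. *)
Definition JS (R : realFieldType) (n : nat) (D : {set 'I_n * 'I_n})
  (S : {set 'I_n * 'I_n})
  : 'M[{fraction {mpoly R[nvars D]}}]_(nvars D, #|S|) :=
  \matrix_(r, c) (tofrac (mderiv r (Kmat R D (enum_val c).1 (enum_val c).2))).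

(* Dimension of the model = generic rank of the (full) Jacobian. *)
Definition model_dim (R : realFieldType) (n : nat) (D : {set 'I_n * 'I_n}) : nat :=
  \rank (JS R D (columns n)).

(* Main.v *)
Require Import Defs.
From HB Require Import structures.
From mathcomp Require Import all_boot all_order all_algebra.
From mathcomp Require Import fraction.
From mathcomp.multinomials Require Import mpoly.
Import Order.TTheory GRing.Theory Num.Theory.
Local Open Scope ring_scope.

Lemma lam_var_inj n (D : {set 'I_n * 'I_n}) : injective (@lam_var n D).
Proof. by move=> a b /(congr1 val) /= /val_inj. Qed.

Lemma dX0 n (R : realFieldType) (D : {set 'I_n * 'I_n}) (v w : 'I_(nvars D)) :
  v != w -> mderiv v ('X_w : {mpoly R[nvars D]}) = 0.
Proof.
move=> vw; rewrite mderivX mnm1E eq_sym (negbTE vw) /=.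
by rewrite scale0r.
Qed.

Lemma dIL0 n (R : realFieldType) (D : {set 'I_n * 'I_n}) (i : 'I_n) (k : 'I_#|D|)
  (a c : 'I_n) : (enum_val k).1 == i -> a != i ->
  mderiv (lam_var k) ((1%:M - Lambda R D) a c) = 0.
Proof.
move=> /eqP ki ai.
rewrite !mxE mderivB.
have -> : mderiv (lam_var k) ((a == c)%:R : {mpoly R[nvars D]}) = 0.
  by case: (a == c); rewrite /= ?mulr1n ?mulr0n -?mpolyC1 ?mpolyC0 mderivC.
rewrite sub0r (raddf_sum (mderiv (lam_var k))) big1 ?oppr0 // => k' /eqP hk'.
apply: dX0; apply/negP => /eqP /lam_var_inj hk.
by move: ki ai; rewrite hk hk' /= => ->; rewrite eqxx.
Qed.

Lemma dK0 n (R : realFieldType) (D : {set 'I_n * 'I_n}) (i : 'I_n) (k : 'I_#|D|)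
  (a b : 'I_n) : (enum_val k).1 == i -> a != i -> b != i ->
  mderiv (lam_var k) (Kmat R D a b) = 0.
Proof.
move=> ki ai bi.
rewrite /Kmat mxE; apply: (etrans (mderivM _ _ _)).
have -> : mderiv (lam_var k) ('X_(s_var D) : {mpoly R[nvars D]}) = 0.
  apply: dX0; rewrite /lam_var /s_var; apply/negP => /eqP /(congr1 val) /=.
  by move=> h; move: (ltn_ord k); rewrite h ltnn.
rewrite mul0r add0r mxE (raddf_sum (mderiv (lam_var k))) big1 ?mulr0 // => c _.
apply: (etrans (mderivM _ _ _)); rewrite [((1%:M - _)^T) _ _]mxE (@dIL0 _ _ _ _ _ _ _ ki ai) (@dIL0 _ _ _ _ _ _ _ ki bi) mul0r mulr0 addr0. by [].
Qed.

Theorem lemma4p1 (R : realFieldType) (n : nat) (D : {set 'I_n * 'I_n})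
  (HD : loopless D)
  (Hdim : model_dim R D = #|D|.+1)
  (Hnc : ~ complete D)
  (i : 'I_n) (S : {set 'I_n * 'I_n})
  (HScol : S \subset columns n)
  (HScard : #|S| = #|D|.+1)
  (HSi : forall p, p \in S -> (p.1 != i) && (p.2 != i)) :
  (\rank (JS R D S) <= #|D| - #|ch D i| + 1)%N.
Proof.
set A := JS R D S.
set Zs := (@lam_var n D) @: [set k : 'I_#|D| | (enum_val k).1 == i].
set W := ~: Zs.
set C := \matrix_(t < #|W|, c < #|S|) A (enum_val t) c.
have rowZ : forall r, r \in Zs -> row r A = 0.
  move=> r /imsetP [k]; rewrite inE => ki ->.
  apply/rowP => c; rewrite [RHS]mxE mxE /A /JS mxE.
  have /andP [h1 h2] := HSi _ (enum_valP c).
  by rewrite (@dK0 _ _ _ _ _ _ _ ki h1 h2) rmorph0.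
have AC : (A <= C)%MS.
  apply/row_subP => r.
  case: (boolP (r \in Zs)) => hr; first by rewrite rowZ // sub0mx.
  have rW : r \in W by rewrite inE.
  have -> : row r A = row (enum_rank_in rW r) C.
    by apply/rowP => c; rewrite !mxE enum_rankK_in.
  exact: row_sub.
have rk : (\rank A <= #|W|)%N := leq_trans (mxrankS AC) (rank_leq_row C).
have chZ : (#|ch D i| <= #|Zs|)%N.
  case: (set_0Vmem (ch D i)) => [->|[j0 hj0]]; first by rewrite cards0.
  have hD : (i, j0) \in D by move: hj0; rewrite inE.
  pose h := fun j => lam_var (enum_rank_in hD (i, j)).
  have hinj : {in ch D i &, injective h}.
    move=> x y; rewrite !inE => hx hy /lam_var_inj /(congr1 enum_val).
    by rewrite !enum_rankK_in // => -[].
  rewrite -(card_in_imset hinj); apply: subset_leq_card.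
  apply/subsetP => z /imsetP [j]; rewrite inE => hj ->.
  apply/imsetP; exists (enum_rank_in hD (i, j)) => //.
  by rewrite inE enum_rankK_in.
have ZD : (#|Zs| <= #|D|)%N.
  by rewrite (leq_trans (leq_imset_card _ _)) // -[X in (_ <= X)%N]card_ord max_card.
have cW : #|W| = (#|D|.+1 - #|Zs|)%N.
  by rewrite /W cardsCs setCK card_ord.
apply: (leq_trans rk); rewrite cW.
have chD : (#|ch D i| <= #|D|)%N := leq_trans chZ ZD.
rewrite addn1 -subSn //; exact: leq_sub2l.
Qed.
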